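(* In any execution of $\mathcal{U}$, suppose that at time $T$ a process $p$ executes line 12 for an operation $o$ and this GCAS returns true, and at a time $T' > T$ a process $p'$ executes line 12 also for $o$, in some iteration of the while loop. Then $p'$ executed line 5 in that same iteration at some time $T_1 < T$.
   Context: Model: an asynchronous shared-memory system with possibly infinitely many processes, any of which may crash, communicating via atomic shared objects. A fetch-and-increment (F\&I) object stores an integer; F\&I$(C)$ atomically returns the current value and increments it. A generalized-compare-and-swap (GCAS) object $O$ stores a value and supports Read$(O)$ and GCAS$(c, O, v_1, v_2)$, which atomically does: if $c(\text{current value of } O, v_1)$ holds then set $O := v_2$ and return true, else return false. Tuples are compared componentwise for $=$; GCAS$(>, A, (t,-,-), v)$ succeeds iff the time field of $A$ is strictly greater than $t$. Implemented type $\mathcal{T} = (OP, RES, Q, \delta)$ with initial state $s_0$; a procedure $apply_{\mathcal{T}}(o,s)$ returns some $(s',r)$ with $(s,o,s',r)\in\delta$. $NULL$ is a value different from every response of $\mathcal{T}$, and $NOOP$ is a name different from every operation of $\mathcal{T}$. Algorithm $\mathcal{U}$: each process $p$ owns a GCAS object $H_p$ with fields $(time, response)$. Shared objects: F\&I object $C$, initially $1$; GCAS object $A$ with fields $(time, op, ptr)$, initially $(0, NOOP, h(NOOP))$, where $h(NOOP)$ is a pointer to an immutable location containing $(0,\perp)$; GCAS object $S$ with fields $(time, state, response, ptr)$, initially $(0, s_0, \perp, h(NOOP))$. Process $p$ performs operation $o$ by calling DoOp$(o)$: (1) DoOp$(o)$ invoked; (2) $t := $ F\&I$(C)$; (3)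 $H_p := (t, NULL)$; (4) while $H_p = (t, NULL)$ do: (5) $(t^*, s^*, r^*, roptr^* ) := S$; (6) GCAS$(=, *roptr^*, (t^*, NULL), (t^*, r^* ))$; (7) GCAS$(>, A, (t,-,-), (t, o, \&H_p))$; (8) $(t', o', roptr') := A$; (9) $(\hat t, \hat r) := *roptr'$; (10) if $(\hat t,\hat r) = (t', NULL)$ then (11) $(s', r') := apply_{\mathcal{T}}(o', s^* )$; (12) GCAS$(=, S, (t^*,s^*,r^*,roptr^* ), (t', s', r', roptr'))$; (13) else GCAS$(=, A, (t', o', roptr'), (t, o, \&H_p))$; end while; (14) return $H_p.response$. Notation: an ''operation'' $o$ means one invocation of DoOp$(o)$ (or the initial $NOOP$). $p(o)$ is the process executing it; $t(o)$ is the value returned by its F\&I at line 2, or $\infty$ if line 2 has not been executed; $h(o)$ is $H_{p(o)}$. For $NOOP$: $t(NOOP)=0$ and $h(NOOP)$ is the immutable location containing $(0,\perp)$. ''Line 12 is executed for $o$'' means the new value written in that GCAS has the form $(t(o), -, r, h(o))$ (equivalently, the process read $(t(o), o, h(o))$ from $A$ at line 8 in that iteration). *)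

(* Defs.v *)
(* Operational model of the universal construction U:
   an asynchronous shared-memory system, interleaving semantics,
   every numbered line of DoOp is one atomic step. *)
From Stdlib Require Import Arith Lia.

Set Implicit Arguments.

(* Process identifiers: possibly infinitely many processes. *)
Definition Proc := nat.

(* Response-field values: NULL, the special initial value (bottom),
   or a response of the implemented type. NULL is distinct from every
   response by construction. *)
Inductive rval (RES : Type) : Type :=
| RNull : rval RES
| RBot  : rval RES
| RVal  : RES -> rval RES.
Arguments RNull {RES}. Arguments RBot {RES}.

Inductive opv (OP : Type) : Type :=
| NoOp : opv OP
| Op   : OP -> opv OP.
Arguments NoOp {OP}.

(* Pointers to response locations: h(NOOP) (immutable, contains (0,bot))
   or &H_p for a process p. *)
Inductive ptr : Type :=
| PNoop : ptr
| PH    : Proc -> ptr.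

(* Program counter: the line about to be executed.  L1 = idle, i.e. the
   next step is the invocation of a new DoOp. *)
Inductive line : Type :=
| L1 | L2 | L3 | L4 | L5 | L6 | L7 | L8 | L9 | L10 | L11 | L12 | L13 | L14.

Section Model.
Variables (OP RES Q : Type).

Record local : Type := mkLocal {
  pc   : line;
  inv  : nat;          (* number of DoOp invocations so far (line 1 steps) *)
  lo   : opv OP;       (* the argument o of the current DoOp *)
  lt   : nat;
  lts  : nat;
  lss  : Q;
  lrs  : rval RES;
  lps  : ptr;
  lt'  : nat;
  lo'  : opv OP;
  lp'  : ptr;
  lth  : nat;
  lrh  : rval RES;
  lsn  : Q;
  lrn  : rval RES
}.

Record config : Type := mkConfig {
  CC : nat;                              (* F&I object C *)
  AA : nat * opv OP * ptr;               (* GCAS object A: (time, op, ptr) *)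
  SS : nat * Q * rval RES * ptr;         (* GCAS object S: (time, state, response, ptr) *)
  HH : Proc -> nat * rval RES;           (* GCAS objects H_p: (time, response) *)
  LL : Proc -> local
}.

Definition deref (c : config) (x : ptr) : nat * rval RES :=
  match x with
  | PNoop => (0, RBot)
  | PH q => HH c q
  end.

Definition upd {X : Type} (f : Proc -> X) (p : Proc) (v : X) : Proc -> X :=
  fun q => if Nat.eqb q p then v else f q.

Definition setL (c : config) (p : Proc) (l : local) : config :=
  mkConfig (CC c) (AA c) (SS c) (HH c) (upd (LL c) p l).

Definition setPc (l : local) (n : line) : local :=
  mkLocal n (inv l) (lo l) (lt l) (lts l) (lss l) (lrs l) (lps l)
          (lt' l) (lo' l) (lp' l) (lth l) (lrh l) (lsn l) (lrn l).

(* One atomic step of process p, transforming configuration c into c'.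
   [apply] is the sequential procedure apply_T. *)
Inductive step (apply : OP -> Q -> Q * RES) (p : Proc) (c c' : config) : Prop :=
| st1 : forall o : OP, pc (LL c p) = L1 ->
    (* (1) DoOp(o) invoked *)
    c' = setL c p (let l := LL c p in
           mkLocal L2 (S (inv l)) (Op o) (lt l) (lts l) (lss l) (lrs l) (lps l)
                   (lt' l) (lo' l) (lp' l) (lth l) (lrh l) (lsn l) (lrn l)) ->
    step apply p c c'
| st2 : pc (LL c p) = L2 ->
    (* (2) t := F&I(C) *)
    c' = mkConfig (S (CC c)) (AA c) (SS c) (HH c)
           (upd (LL c) p (let l := LL c p in
              mkLocal L3 (inv l) (lo l) (CC c) (lts l) (lss l) (lrs l) (lps l)
                      (lt' l) (lo' l) (lp' l) (lth l) (lrh l) (lsn l) (lrn l))) ->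
    step apply p c c'
| st3 : pc (LL c p) = L3 ->
    (* (3) H_p := (t, NULL) *)
    c' = mkConfig (CC c) (AA c) (SS c) (upd (HH c) p (lt (LL c p), RNull))
           (upd (LL c) p (setPc (LL c p) L4)) ->
    step apply p c c'
| st4_loop : pc (LL c p) = L4 -> HH c p = (lt (LL c p), RNull) ->
    (* (4) while test true *)
    c' = setL c p (setPc (LL c p) L5) -> step apply p c c'
| st4_exit : pc (LL c p) = L4 -> HH c p <> (lt (LL c p), RNull) ->
    (* (4) while test false *)
    c' = setL c p (setPc (LL c p) L14) -> step apply p c c'
| st5 : pc (LL c p) = L5 ->
    (* (5) (t_star, s_star, r_star, roptr_star) := S *)
    c' = setL c p (let l := LL c p in
           match SS c with (ts, ss, rs, ps) =>
             mkLocal L6 (inv l) (lo l) (lt l) ts ss rs ps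
                     (lt' l) (lo' l) (lp' l) (lth l) (lrh l) (lsn l) (lrn l)
           end) ->
    step apply p c c'
| st6_succ : forall q, pc (LL c p) = L6 -> lps (LL c p) = PH q ->
    HH c q = (lts (LL c p), RNull) ->
    (* (6) GCAS(=, deref roptr_star, (t_star,NULL), (t_star,r_star)) succeeds *)
    c' = mkConfig (CC c) (AA c) (SS c)
           (upd (HH c) q (lts (LL c p), lrs (LL c p)))
           (upd (LL c) p (setPc (LL c p) L7)) ->
    step apply p c c'
| st6_fail : pc (LL c p) = L6 ->
    deref c (lps (LL c p)) <> (lts (LL c p), RNull) ->
    (* (6) GCAS fails (always the case for the immutable location h(NOOP)) *)
    c' = setL c p (setPc (LL c p) L7) -> step apply p c c'
| st7_succ : pc (LL c p) = L7 -> fst (fst (AA c)) > lt (LL c p) ->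
    (* (7) GCAS(>, A, (t,-,-), (t, o, &H_p)) succeeds *)
    c' = mkConfig (CC c) (lt (LL c p), lo (LL c p), PH p) (SS c) (HH c)
           (upd (LL c) p (setPc (LL c p) L8)) ->
    step apply p c c'
| st7_fail : pc (LL c p) = L7 -> ~ (fst (fst (AA c)) > lt (LL c p)) ->
    c' = setL c p (setPc (LL c p) L8) -> step apply p c c'
| st8 : pc (LL c p) = L8 ->
    (* (8) (t', o', roptr') := A *)
    c' = setL c p (let l := LL c p in
           match AA c with (t', o', p') =>
             mkLocal L9 (inv l) (lo l) (lt l) (lts l) (lss l) (lrs l) (lps l)
                     t' o' p' (lth l) (lrh l) (lsn l) (lrn l)
           end) ->
    step apply p c c'
| st9 : pc (LL c p) = L9 ->
    (* (9) (t-hat, r-hat) := deref roptr' *)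
    c' = setL c p (let l := LL c p in
           match deref c (lp' l) with (th, rh) =>
             mkLocal L10 (inv l) (lo l) (lt l) (lts l) (lss l) (lrs l) (lps l)
                     (lt' l) (lo' l) (lp' l) th rh (lsn l) (lrn l)
           end) ->
    step apply p c c'
| st10_then : pc (LL c p) = L10 ->
    (lth (LL c p), lrh (LL c p)) = (lt' (LL c p), RNull) ->
    c' = setL c p (setPc (LL c p) L11) -> step apply p c c'
| st10_else : pc (LL c p) = L10 ->
    (lth (LL c p), lrh (LL c p)) <> (lt' (LL c p), RNull) ->
    c' = setL c p (setPc (LL c p) L13) -> step apply p c c'
| st11 : forall o', pc (LL c p) = L11 -> lo' (LL c p) = Op o' ->
    (* (11) (s', r') := apply_T(o', s_star) *)
    c' = setL c p (let l := LL c p in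
           mkLocal L12 (inv l) (lo l) (lt l) (lts l) (lss l) (lrs l) (lps l)
                   (lt' l) (lo' l) (lp' l) (lth l) (lrh l)
                   (fst (apply o' (lss l))) (RVal (snd (apply o' (lss l))))) ->
    step apply p c c'
| st12_succ : pc (LL c p) = L12 ->
    (let l := LL c p in SS c = (lts l, lss l, lrs l, lps l)) ->
    (* (12) GCAS(=, S, (t_star,s_star,r_star,roptr_star), (t', s', r', roptr')) succeeds *)
    c' = mkConfig (CC c) (AA c)
           (let l := LL c p in (lt' l, lsn l, lrn l, lp' l)) (HH c)
           (upd (LL c) p (setPc (LL c p) L4)) ->
    step apply p c c'
| st12_fail : pc (LL c p) = L12 ->
    (let l := LL c p in SS c <> (lts l, lss l, lrs l, lps l)) ->
    c' = setL c p (setPc (LL c p) L4) -> step apply p c c'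
| st13_succ : pc (LL c p) = L13 ->
    (let l := LL c p in AA c = (lt' l, lo' l, lp' l)) ->
    (* (13) GCAS(=, A, (t', o', roptr'), (t, o, &H_p)) succeeds *)
    c' = mkConfig (CC c) (lt (LL c p), lo (LL c p), PH p) (SS c) (HH c)
           (upd (LL c) p (setPc (LL c p) L4)) ->
    step apply p c c'
| st13_fail : pc (LL c p) = L13 ->
    (let l := LL c p in AA c <> (lt' l, lo' l, lp' l)) ->
    c' = setL c p (setPc (LL c p) L4) -> step apply p c c'
| st14 : pc (LL c p) = L14 ->
    (* (14) return H_p.response; the process becomes idle *)
    c' = setL c p (setPc (LL c p) L1) -> step apply p c c'.

(* Initial configuration.  The initial contents H0 of the H_p are left
   unspecified, as are the initial values of local variables (l0). *)
Definition init_config (s0 : Q) (H0 : Proc -> nat * rval RES)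
    (l0 : Proc -> local) : config :=
  mkConfig 1 (0, NoOp, PNoop) (0, s0, RBot, PNoop) H0 l0.

(* An execution: a sequence of configurations e 0, e 1, ... and a schedule;
   at time n either process p takes one atomic step (who n = Some p) or
   nothing happens (who n = None; this allows finite executions and
   crashes, a crashed process simply never being scheduled again). *)
Definition execution (apply : OP -> Q -> Q * RES) (s0 : Q)
    (e : nat -> config) (who : nat -> option Proc) : Prop :=
  (exists H0 l0, e 0 = init_config s0 H0 l0 /\ forall p, pc (l0 p) = L1)
  /\ forall n, match who n with
               | Some p => step apply p (e n) (e (S n))
               | None => e (S n) = e n
               end.

(* Operations: the initial NOOP, or the k-th invocation of DoOp by p. *)
Inductive operation : Type :=
| OpNoop : operation
| OpInv  : Proc -> nat -> operation.

(* t(o) = t : the F&I at line 2 of operation o returned t (t(NOOP) = 0).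
   If line 2 was never executed for o, t(o) is infinity, and no t
   satisfies this predicate. *)
Definition t_of (e : nat -> config) (who : nat -> option Proc)
    (o : operation) (t : nat) : Prop :=
  match o with
  | OpNoop => t = 0
  | OpInv p k => exists n, who n = Some p /\ pc (LL (e n) p) = L2
                           /\ inv (LL (e n) p) = k /\ CC (e n) = t
  end.

Definition h_of (o : operation) : ptr :=
  match o with OpNoop => PNoop | OpInv p _ => PH p end.

(* At time n, process p executes line 12 for o: the new value written
   by that GCAS has the form (t(o), -, -, h(o)). *)
Definition exec_line12_for e who (n : nat) (p : Proc) (o : operation) : Prop :=
  who n = Some p /\ pc (LL (e n) p) = L12 /\
  t_of e who o (lt' (LL (e n) p)) /\ lp' (LL (e n) p) = h_of o.

(* ... and that GCAS returns true *)
Definition line12_succeeds (e : nat -> config) (n : nat) (p : Proc) : Prop :=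
  let l := LL (e n) p in SS (e n) = (lts l, lss l, lrs l, lps l).

Definition exec_line5 (e : nat -> config) who (n : nat) (p : Proc) : Prop :=
  who n = Some p /\ pc (LL (e n) p) = L5.

End Model.

(* Main.v *)
Require Import Defs.
From Stdlib Require Import Arith Lia Classical.

Section Proof.
Variables (OP RES Q : Type) (apply : OP -> Q -> Q * RES) (s0 : Q)
  (e : nat -> config OP RES Q) (who : nat -> option Proc).
Hypothesis Hexec : execution apply s0 e who.

Lemma step_at n p : who n = Some p -> step apply p (e n) (e (S n)).
Proof. intro H. pose proof (proj2 Hexec n) as Hs. rewrite H in Hs. exact Hs. Qed.

Ltac rwS n := match goal with H : e (S n) = _ |- _ => rewrite H end.

Lemma LL_other n r : who n <> Some r -> LL (e (S n)) r = LL (e n) r.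
Proof.
  intro Hne. pose proof (proj2 Hexec n) as Hs.
  destruct (who n) as [p|] eqn:Hw; [|rewrite Hs; reflexivity].
  assert (Hpr : (r =? p) = false) by (apply Nat.eqb_neq; congruence).
  destruct Hs; rwS n; unfold setL, upd; simpl; rewrite Hpr; reflexivity.
Qed.

Lemma LL_init r : pc (LL (e 0) r) = L1.
Proof. destruct Hexec as [[H0 [l0 [He Hl]]] _]. rewrite He. apply Hl. Qed.

Lemma prev n r : (LL (e n) r = LL (e 0) r /\ forall k, k < n -> who k <> Some r) \/
  exists m, m < n /\ who m = Some r /\ LL (e (S m)) r = LL (e n) r /\
     forall k, m < k < n -> who k <> Some r.
Proof.
  induction n.
  - left. split; [reflexivity| intros; lia].
  - assert (Hdec : who n = Some r \/ who n <> Some r).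
    { destruct (who n) as [p|]; [destruct (Nat.eq_dec p r); [left; congruence|right; congruence]|right; discriminate]. }
    destruct Hdec as [Hw|Hw].
    + right. exists n. split; [lia|split; [exact Hw|split; [reflexivity| intros; lia]]].
    + rewrite (LL_other n r Hw). destruct IHn as [[H1 H2]|[m [H1 [H2 [H3 H4]]]]].
      * left. split; [exact H1| intros k Hk; destruct (Nat.eq_dec k n); [subst; exact Hw| apply H2; lia]].
      * right. exists m. split; [lia|split; [exact H2|split; [exact H3|]]].
        intros k Hk; destruct (Nat.eq_dec k n); [subst; exact Hw| apply H4; lia].
Qed.

Lemma back n r : pc (LL (e n) r) <> L1 -> exists m, m < n /\ who m = Some r /\
  step apply r (e m) (e (S m)) /\ LL (e (S m)) r = LL (e n) r /\
     forall k, m < k < n -> who k <> Some r.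
Proof.
  intro H. destruct (prev n r) as [[H1 _]|[m [H1 [H2 [H3 H4]]]]].
  - rewrite H1, LL_init in H. congruence.
  - exists m. repeat split; auto. apply step_at; auto.
Qed.


Ltac dmatch := repeat match goal with
  | |- context [match ?x with pair _ _ => _ end] => let E := fresh "E" in destruct x eqn:E
  end.
Ltac comp n := rwS n; unfold setL, upd; simpl; rewrite ?Nat.eqb_refl; simpl; dmatch; simpl.

Lemma decwho n r : who n = Some r \/ who n <> Some r.
Proof. destruct (who n) as [p|]; [destruct (Nat.eq_dec p r); [left; congruence|right; congruence]|right; discriminate]. Qed.

Lemma CC_step n : CC (e n) <= CC (e (S n)).
Proof.
  pose proof (proj2 Hexec n) as Hs. destruct (who n) as [p|].
  - destruct Hs; rwS n; simpl; lia.
  - rewrite Hs; lia.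
Qed.

Lemma CC_mono a b : a <= b -> CC (e a) <= CC (e b).
Proof. induction 1; [lia|]. pose proof (CC_step m); lia. Qed.

Definition notL12 (l : line) : Prop := match l with L1 | L2 => False | _ => True end.

Lemma CC_inv n r : notL12 (pc (LL (e n) r)) -> lt (LL (e n) r) < CC (e n).
Proof.
  induction n.
  - rewrite LL_init. simpl. tauto.
  - destruct (decwho n r) as [Hw|Hw].
    + pose proof (step_at n r Hw) as Hs.
      destruct Hs; comp n; intro Hp;
      try (match goal with Hpc : pc (LL (e n) r) = _ |- _ => rewrite Hpc in IHn end; simpl in IHn;
           specialize (IHn I)); try lia; try (simpl in Hp; tauto).
    + rewrite (LL_other n r Hw). intro Hp. pose proof (CC_step n). specialize (IHn Hp). lia.
Qed.

Lemma inv_step n r : inv (LL (e n) r) <= inv (LL (e (S n)) r).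
Proof.
  destruct (decwho n r) as [Hw|Hw].
  - pose proof (step_at n r Hw) as Hs. destruct Hs; comp n; lia.
  - rewrite (LL_other n r Hw). lia.
Qed.

Lemma inv_mono a b r : a <= b -> inv (LL (e a) r) <= inv (LL (e b) r).
Proof. induction 1; [lia|]. pose proof (inv_step m r); lia. Qed.


Definition G t q n := exists m, m < n /\ who m = Some q /\ pc (LL (e m) q) = L3 /\ lt (LL (e m) q) = t.

Lemma G_S t q n : G t q n -> G t q (S n).
Proof. intros [m Hm]. exists m. intuition lia. Qed.
Lemma G_mono t q a b : a <= b -> G t q a -> G t q b.
Proof. induction 1; auto. intro; apply G_S; auto. Qed.

Definition ge4 (l : line) : Prop := match l with L1 | L2 | L3 => False | _ => True end.
Definition ge9 (l : line) : Prop := match l with L9 | L10 | L11 | L12 => True | _ => False end.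

Lemma D_inv n r : ge4 (pc (LL (e n) r)) -> G (lt (LL (e n) r)) r n.
Proof.
  induction n.
  - rewrite LL_init. simpl. tauto.
  - destruct (decwho n r) as [Hw|Hw].
    + pose proof (step_at n r Hw) as Hs.
      destruct Hs; comp n; intro Hp; try (simpl in Hp; tauto);
      try (apply G_S; apply IHn;
           match goal with Hpc : pc (LL (e n) r) = _ |- _ => rewrite Hpc end; simpl; exact I).
      exists n. repeat split; auto.
    + rewrite (LL_other n r Hw). intro Hp. apply G_S; auto.
Qed.

Lemma A_inv n : forall t o q, AA (e n) = (t, o, PH q) -> G t q n.
Proof.
  induction n.
  - destruct Hexec as [[H0 [l0 [He Hl]]] _]. rewrite He. simpl. discriminate.
  - intros t o q. pose proof (proj2 Hexec n) as Hs. destruct (who n) as [p|] eqn:Hw.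
    + destruct Hs; rwS n; simpl; intro HA; try (apply G_S; eapply IHn; exact HA);
      injection HA; intros; subst; apply G_S; apply D_inv;
      match goal with Hpc : pc (LL (e n) _) = _ |- _ => rewrite Hpc end; exact I.
    + rewrite Hs. intro; eapply G_S, IHn; eauto.
Qed.

Lemma C_inv n r q : ge9 (pc (LL (e n) r)) -> lp' (LL (e n) r) = PH q -> G (lt' (LL (e n) r)) q n.
Proof.
  induction n.
  - rewrite LL_init. simpl. tauto.
  - destruct (decwho n r) as [Hw|Hw].
    + pose proof (step_at n r Hw) as Hs.
      destruct Hs; comp n; intros Hp Hq; try (simpl in Hp; tauto);
      try (apply G_S; apply IHn; [match goal with Hpc : pc (LL (e n) r) = _ |- _ => rewrite Hpc end; exact I| exact Hq]).
      subst. apply G_S. eapply A_inv. exact E.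
    + rewrite (LL_other n r Hw). intros Hp Hq. apply G_S; auto.
Qed.

Lemma S_inv n : forall t s rr q, SS (e n) = (t, s, rr, PH q) -> G t q n.
Proof.
  induction n.
  - destruct Hexec as [[H0 [l0 [He Hl]]] _]. rewrite He. simpl. discriminate.
  - intros t s rr q. pose proof (proj2 Hexec n) as Hs. destruct (who n) as [p|] eqn:Hw.
    + destruct Hs; rwS n; simpl; intro HA; try (apply G_S; eapply IHn; exact HA).
      injection HA; intros; subst. apply G_S. apply C_inv; auto.
      match goal with Hpc : pc (LL (e n) _) = _ |- _ => rewrite Hpc end; exact I.
    + rewrite Hs. intro; eapply G_S, IHn; eauto.
Qed.


Definition Rloc (l : local OP RES Q) : Prop :=
  (pc l = L6 -> lrs l <> RNull) /\ (pc l = L12 -> lrn l <> RNull).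

Lemma R_inv n : (forall ts ss rs ps, SS (e n) = (ts, ss, rs, ps) -> rs <> RNull) /\
   forall r, Rloc (LL (e n) r).
Proof.
  induction n.
  - destruct Hexec as [[H0 [l0 [He Hl]]] _]. rewrite He. simpl. split.
    + intros. injection H; intros; subst; discriminate.
    + intro r. unfold Rloc. rewrite Hl. split; discriminate.
  - destruct IHn as [IS IL]. split.
    + intros ts ss rs ps. pose proof (proj2 Hexec n) as Hs. destruct (who n) as [p|] eqn:Hw.
      * destruct Hs; rwS n; simpl; intro HA; try (eapply IS; exact HA).
        injection HA; intros; subst. apply (proj2 (IL p)); auto.
      * rewrite Hs. apply IS.
    + intro r. destruct (decwho n r) as [Hw|Hw].
      * pose proof (step_at n r Hw) as Hs. unfold Rloc.
        destruct Hs; comp n; split; intro Hp; try discriminate;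
        try (apply (IL r); assumption); try discriminate; try (eapply IS; eauto).
      * rewrite (LL_other n r Hw). apply IL.
Qed.


Lemma HH_step n p q : who n = Some p ->
  HH (e (S n)) q = HH (e n) q \/
  (p = q /\ pc (LL (e n) p) = L3 /\ HH (e (S n)) q = (lt (LL (e n) p), RNull)) \/
  (pc (LL (e n) p) = L6 /\ lps (LL (e n) p) = PH q /\ HH (e (S n)) q = (lts (LL (e n) p), lrs (LL (e n) p))).
Proof.
  intro Hw. pose proof (step_at n p Hw) as Hs.
  destruct Hs; rwS n; simpl; auto; unfold upd; destruct (q =? _) eqn:Eq; auto;
  apply Nat.eqb_eq in Eq; subst; auto.
Qed.

Lemma SS_step n : SS (e (S n)) = SS (e n) \/ exists p, who n = Some p /\ pc (LL (e n) p) = L12 /\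
  SS (e n) = (lts (LL (e n) p), lss (LL (e n) p), lrs (LL (e n) p), lps (LL (e n) p)) /\
  SS (e (S n)) = (lt' (LL (e n) p), lsn (LL (e n) p), lrn (LL (e n) p), lp' (LL (e n) p)).
Proof.
  pose proof (proj2 Hexec n) as Hs. destruct (who n) as [p|] eqn:Hw.
  - destruct Hs; rwS n; simpl; auto. right. exists p. auto.
  - rewrite Hs. auto.
Qed.

Ltac dmatchH H := repeat match type of H with
  | context [match ?x with pair _ _ => _ end] => let E := fresh "E" in destruct x eqn:E
  end; simpl in H.
Ltac bcomp m Heq := match goal with H : e (S m) = _ |- _ => rewrite H in Heq end;
  unfold setL, upd in Heq; simpl in Heq; rewrite ?Nat.eqb_refl in Heq; simpl in Heq; dmatchH Heq.

Lemma lt3_strict m0 k q : who m0 = Some q -> pc (LL (e m0) q) = L3 ->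
  pc (LL (e k) q) = L3 -> m0 < k -> lt (LL (e m0) q) < lt (LL (e k) q).
Proof.
  intros Hw0 Hp0 Hpk Hlt.
  destruct (back k q) as [m [Hm [Hw [Hs [Heq Hgap]]]]]. { rewrite Hpk; discriminate. }
  assert (m0 <= m). { destruct (Nat.le_gt_cases m0 m); auto. exfalso. apply (Hgap m0); auto. }
  destruct Hs; bcomp m Heq; rewrite <- Heq in Hpk; simpl in Hpk; try discriminate.
  rewrite <- Heq. simpl.
  assert (m0 <> m) by (intro; subst; congruence).
  pose proof (CC_inv m0 q ltac:(rewrite Hp0; exact I)).
  pose proof (CC_mono m0 m ltac:(lia)). lia.
Qed.


Lemma persist t q m : G t q m -> HH (e m) q <> (t, RNull) ->
  forall j, HH (e (j + m)) q <> (t, RNull).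
Proof.
  intros HG H0 j. induction j; [exact H0|].
  simpl. pose proof (proj2 Hexec (j + m)) as Hs. destruct (who (j + m)) as [p|] eqn:Hw.
  - destruct (HH_step (j + m) p q Hw) as [E|[[E1 [E2 E3]]|[E1 [E2 E3]]]].
    + rewrite E; auto.
    + subst p. rewrite E3. destruct HG as [m3 [Hm3 [Hw3 [Hp3 Ht3]]]].
      pose proof (lt3_strict m3 (j + m) q Hw3 Hp3 E2 ltac:(lia)).
      intro X; injection X; intros; lia.
    + rewrite E3. pose proof (proj1 (proj2 (R_inv (j + m)) p) E1).
      intro X; injection X; intros; congruence.
  - rewrite Hs; auto.
Qed.

Lemma kill6 m6 r t q : who m6 = Some r -> pc (LL (e m6) r) = L6 ->
  lts (LL (e m6) r) = t -> lps (LL (e m6) r) = PH q -> G t q m6 ->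
  forall k, m6 < k -> HH (e k) q <> (t, RNull).
Proof.
  intros Hw Hp Ht Hq HG k Hk.
  assert (H1 : HH (e (S m6)) q <> (t, RNull)).
  { pose proof (step_at m6 r Hw) as Hs.
    pose proof (proj1 (proj2 (R_inv m6) r) Hp) as HR.
    destruct Hs; try congruence.
    - rwS m6. simpl. unfold upd.
      assert (q0 = q) by congruence. subst q0. rewrite Nat.eqb_refl.
      intro X; injection X; intros; congruence.
    - rwS m6. simpl. rewrite Hq in *. simpl in *. congruence. }
  replace k with ((k - S m6) + S m6) by lia.
  apply persist; auto. apply G_S; auto.
Qed.


Ltac link n r Hpc m Heq Hg :=
  let Hm := fresh "Hm" in let Hw := fresh "Hw" in let Hs := fresh "Hs" in
  let Hc := fresh "Hc" in pose proof Hpc as Hc;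
  destruct (back n r) as [m [Hm [Hw [Hs [Heq Hg]]]]]; [rewrite Hpc; discriminate|];
  destruct Hs; bcomp m Heq; rewrite <- Heq in Hc; simpl in Hc; try discriminate;
  rewrite <- Heq; simpl; clear Hc.
Ltac rnpc m r P := match goal with H : pc (LL (e m) r) = _ |- _ => rename H into P end.

Lemma iter n r : pc (LL (e n) r) = L12 -> exists m5 m6 m9, m5 < m6 < m9 /\ m9 < n /\
  who m5 = Some r /\ pc (LL (e m5) r) = L5 /\
  SS (e m5) = (lts (LL (e n) r), lss (LL (e n) r), lrs (LL (e n) r), lps (LL (e n) r)) /\
  who m6 = Some r /\ pc (LL (e m6) r) = L6 /\ lts (LL (e m6) r) = lts (LL (e n) r) /\
  lps (LL (e m6) r) = lps (LL (e n) r) /\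
  deref (e m9) (lp' (LL (e n) r)) = (lt' (LL (e n) r), RNull) /\
  (forall k, m5 < k < n -> who k = Some r -> pc (LL (e k) r) <> L5).
Proof.
  intro Hpc.
  link n r Hpc m11 Heq11 Hg11. rnpc m11 r P11.
  link m11 r P11 m10 Heq10 Hg10. rnpc m10 r P10.
  match goal with H : (lth _, lrh _) = _ |- _ => rename H into Hthen end.
  link m10 r P10 m9 Heq9 Hg9. rnpc m9 r P9. rewrite <- Heq9 in Hthen. simpl in Hthen.
  assert (Hd : deref (e m9) (lp' (LL (e m9) r)) = (lt' (LL (e m9) r), RNull)) by congruence.
  link m9 r P9 m8 Heq8 Hg8. rnpc m8 r P8. rewrite <- Heq8 in Hd; simpl in Hd.
  destruct (back m8 r) as [m7 [Hm7 [Hw7 [Hs7 [Heq7 Hg7]]]]]; [rewrite P8; discriminate|].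
  assert (Hk7 : pc (LL (e m7) r) = L7 /\ lts (LL (e m8) r) = lts (LL (e m7) r) /\
     lss (LL (e m8) r) = lss (LL (e m7) r) /\ lrs (LL (e m8) r) = lrs (LL (e m7) r) /\
     lps (LL (e m8) r) = lps (LL (e m7) r)).
  { pose proof P8 as Hc. destruct Hs7; bcomp m7 Heq7; rewrite <- Heq7 in Hc |- *; simpl in Hc |- *;
    try discriminate; auto. }
  destruct Hk7 as [P7 [K1 [K2 [K3 K4]]]]. rewrite K1, K2, K3, K4.
  destruct (back m7 r) as [m6 [Hm6 [Hw6 [Hs6 [Heq6 Hg6]]]]]; [rewrite P7; discriminate|].
  assert (Hk6 : pc (LL (e m6) r) = L6 /\ lts (LL (e m7) r) = lts (LL (e m6) r) /\
     lss (LL (e m7) r) = lss (LL (e m6) r) /\ lrs (LL (e m7) r) = lrs (LL (e m6) r) /\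
     lps (LL (e m7) r) = lps (LL (e m6) r)).
  { pose proof P7 as Hc. destruct Hs6; bcomp m6 Heq6; rewrite <- Heq6 in Hc |- *; simpl in Hc |- *;
    try discriminate; auto. }
  destruct Hk6 as [P6 [J1 [J2 [J3 J4]]]]. rewrite J1, J2, J3, J4.
  link m6 r P6 m5 Heq5 Hg5. rnpc m5 r P5.
  exists m5, m6, m9.
  assert (Hl6 : lts (LL (e m6) r) = n2 /\ lps (LL (e m6) r) = p2) by (rewrite <- Heq5; auto).
  destruct Hl6 as [Hl6a Hl6b].
  repeat split; try lia; auto.
  intros k Hk Hwk.
  assert (k = m6 \/ k = m7 \/ k = m8 \/ k = m9 \/ k = m10 \/ k = m11 \/ (m5 < k < m6) \/ (m6 < k < m7)
    \/ (m7 < k < m8) \/ (m8 < k < m9) \/ (m9 < k < m10) \/ (m10 < k < m11) \/ (m11 < k < n)) as Hc by lia.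
  repeat destruct Hc as [Hc|Hc]; try (subst k; congruence);
  exfalso; [apply (Hg5 k)|apply (Hg6 k)|apply (Hg7 k)|apply (Hg8 k)|apply (Hg9 k)|apply (Hg10 k)|apply (Hg11 k)]; auto.
Qed.

Lemma S_first a b : a <= b -> SS (e b) = SS (e a) \/
  exists c, a <= c < b /\ SS (e c) = SS (e a) /\ SS (e (S c)) <> SS (e c).
Proof.
  induction 1 as [|m Hm IH]; [left; reflexivity|].
  destruct IH as [IH|[c [Hc1 [Hc2 Hc3]]]].
  - destruct (classic (SS (e (S m)) = SS (e m))) as [E|E].
    + left; congruence.
    + right. exists m. split; [lia|split; auto].
  - right. exists c. split; [lia|split; auto].
Qed.

Lemma t_of_unique o t1 t2 : t_of e who o t1 -> t_of e who o t2 -> t1 = t2.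
Proof.
  assert (Key : forall q k n1 n2, n1 < n2 -> who n1 = Some q -> pc (LL (e n1) q) = L2 ->
     inv (LL (e n1) q) = k -> who n2 = Some q -> pc (LL (e n2) q) = L2 ->
     inv (LL (e n2) q) = k -> False).
  { intros q k n1 n2 Hlt Hw1 Hp1 Hi1 Hw2 Hp2 Hi2.
    destruct (back n2 q) as [m [Hm [Hw [Hs [Heq Hg]]]]]. { rewrite Hp2; discriminate. }
    assert (n1 <= m). { destruct (Nat.le_gt_cases n1 m); auto. exfalso. apply (Hg n1); auto. }
    pose proof Hp2 as Hc.
    destruct Hs; bcomp m Heq; rewrite <- Heq in Hc; simpl in Hc; try discriminate.
    assert (n1 <> m) by (intro; subst; congruence).
    pose proof (inv_mono n1 m q ltac:(lia)).
    rewrite <- Heq in Hi2. simpl in Hi2. lia. }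
  destruct o as [|q k]; simpl.
  - intros; subst; auto.
  - intros [n1 [A1 [A2 [A3 A4]]]] [n2 [B1 [B2 [B3 B4]]]].
    destruct (Nat.lt_total n1 n2) as [H|[H|H]].
    + exfalso; eapply Key; [exact H|..]; eauto.
    + subst; auto.
    + exfalso; eapply Key; [exact H|..]; eauto.
Qed.


End Proof.

Theorem mainTheorem11
  (OP RES Q : Type) (delta : Q -> OP -> Q -> RES -> Prop) (s0 : Q)
  (apply : OP -> Q -> Q * RES)
  (apply_spec : forall o s, delta s o (fst (apply o s)) (snd (apply o s)))
  (e : nat -> config OP RES Q) (who : nat -> option Proc)
  (Hexec : execution apply s0 e who)
  (o : operation) (p p' : Proc) (T T' : nat)
  (H12 : exec_line12_for e who T p o) (Hsucc : line12_succeeds e T p)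
  (HTT' : T < T')
  (H12' : exec_line12_for e who T' p' o) :
  exists T1, T1 < T /\ exec_line5 e who T1 p' /\
    (* line 5 at T1 belongs to the same iteration as line 12 at T':
       p' executes no other line-5 step between T1 and T' *)
    forall n, T1 < n < T' -> ~ exec_line5 e who n p'.
Proof.
  destruct H12 as [Hw [Hp [Ht Hh]]]. destruct H12' as [Hw' [Hp' [Ht' Hh']]].
  destruct (iter _ _ _ _ _ _ _ Hexec T' p' Hp') as [m5 [m6 [m9 [Hlt1 [Hlt2 [Hw5 [Hp5 [HS5 [Hw6 [Hp6 [Hts6 [Hps6 [Hd9 Hgap]]]]]]]]]]]]].
  destruct o as [|q k].
  { simpl in Hh'. rewrite Hh' in Hd9. simpl in Hd9. discriminate. }
  simpl in Hh, Hh'.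
  pose proof (t_of_unique _ _ _ _ _ _ _ Hexec _ _ _ Ht Ht') as Htt.
  set (t := lt' (LL (e T) p)) in *.
  exists m5. split; [|split; [split; auto|]].
  2:{ intros n Hn [Hwn Hpn]. exact (Hgap n Hn Hwn Hpn). }
  destruct (Nat.lt_ge_cases m5 T) as [H|H]; auto. exfalso.
  destruct (Nat.eq_dec m5 T) as [E|E].
  { subst m5. rewrite Hw in Hw5. injection Hw5; intro; subst p'. congruence. }
  assert (HX : SS (e (S T)) = (t, lsn (LL (e T) p), lrn (LL (e T) p), PH q)).
  { pose proof (step_at _ _ _ _ _ _ _ Hexec T p Hw) as Hs. unfold line12_succeeds in Hsucc.
    destruct Hs; try congruence. match goal with H : e (S T) = _ |- _ => rewrite H end. simpl. subst t. rewrite Hh. reflexivity. }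
  rewrite Hh' in Hd9. simpl in Hd9.
  destruct (S_first _ _ _ e (S T) m5 ltac:(lia)) as [E1|[c [Hc1 [Hc2 Hc3]]]].
  - rewrite HS5, HX in E1. injection E1; intros Eps _ _ Ets.
    assert (HG : G _ _ _ e who t q m5) by (eapply (S_inv _ _ _ _ _ _ _ Hexec); rewrite HS5, <- Ets, Eps; reflexivity).
    apply (kill6 _ _ _ _ _ _ _ Hexec m6 p' t q Hw6 Hp6 ltac:(congruence) ltac:(congruence)
             (G_mono _ _ _ e who t q m5 m6 ltac:(lia) HG) m9 ltac:(lia)).
    congruence.
  - destruct (SS_step _ _ _ _ _ _ _ Hexec c) as [E2|[b [Hwb [Hpb [Hsb Hsb']]]]]; [congruence|].
    destruct (iter _ _ _ _ _ _ _ Hexec c b Hpb) as [b5 [b6 [b9 [K1 [K2 [Kw5 [Kp5 [KS5 [Kw6 [Kp6 [Kts6 [Kps6 _]]]]]]]]]]]].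
    rewrite Hc2, HX in Hsb. injection Hsb; intros Eps _ _ Ets.
    assert (HG : G _ _ _ e who t q b5) by (eapply (S_inv _ _ _ _ _ _ _ Hexec); rewrite KS5, <- Ets, <- Eps; reflexivity).
    apply (kill6 _ _ _ _ _ _ _ Hexec b6 b t q Kw6 Kp6 ltac:(congruence) ltac:(congruence)
             (G_mono _ _ _ e who t q b5 b6 ltac:(lia) HG) m9 ltac:(lia)).
    congruence.
Qed.
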